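(* Let $F_2=\langle a,b\rangle$ be the free group of rank two and let $\rho:F_2\to PSL(2,\mathbb{C})$ be a homomorphism with $\rho(a)$ parabolic. Then there is a homomorphism $\tilde\rho:F_2\to PSL(2,\mathbb{C})$ with $\tilde\rho(a)=\rho(a)$, $\tilde\rho(b)$ elliptic of order two, and \[\operatorname{tr}[\rho(a),\rho(b)]-2=\operatorname{tr}[\tilde\rho(a),\tilde\rho(b)]-2 .\] If $\rho(F_2)$ is discrete, then so is $\tilde\rho(F_2)$.
   Context: $[x,y]=xyx^{-1}y^{-1}$; the trace of a commutator is well defined in $PSL(2,\mathbb{C})$. *)

(* Defs.v *)
From HB Require Import structures.
From mathcomp Require Import all_boot all_order all_algebra.
From mathcomp Require Import reals.
From mathcomp Require Import complex.
Set Implicit Arguments. Unset Strict Implicit. Unset Printing Implicit Defensive.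
Import Order.TTheory GRing.Theory Num.Theory.
Local Open Scope ring_scope.

(* We work with C := R[i] for an arbitrary R : realType (a copy of the reals),
   and represent PSL(2,C) elements by lifts in SL(2,C) (2x2 matrices of det 1);
   a matrix M represents the class {M, -M}. *)

Section Defs.
Variable R : realType.
Local Notation C := (R[i]).

Definition SL2 (M : 'M[C]_2) : Prop := \det M = 1.

Definition psl_trivial (M : 'M[C]_2) : Prop := M = 1 \/ M = - 1.

Definition parabolic (M : 'M[C]_2) : Prop :=
  (\tr M = 2 \/ \tr M = - 2) /\ ~ psl_trivial M.

Definition elliptic (M : 'M[C]_2) : Prop :=
  \tr M \is Num.real /\ `|\tr M| < 2.

Definition order_two (M : 'M[C]_2) : Prop :=
  psl_trivial (M ^+ 2) /\ ~ psl_trivial M.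

Definition comm (X Y : 'M[C]_2) : 'M[C]_2 := X * Y * X^-1 * Y^-1.

Inductive gen (A B : 'M[C]_2) : 'M[C]_2 -> Prop :=
| gen1 : gen A B 1
| genA  M : gen A B M -> gen A B (A * M)
| genAV M : gen A B M -> gen A B (A^-1 * M)
| genB  M : gen A B M -> gen A B (B * M)
| genBV M : gen A B M -> gen A B (B^-1 * M).

(* The image in PSL(2,C) of <A,B> is discrete: the identity is isolated, i.e.
   some neighbourhood of {1,-1} (entrywise distance < eps) contains no element
   of <A,B> other than +-1. *)
Definition psl_discrete (A B : 'M[C]_2) : Prop :=
  exists eps : C, 0 < eps /\
    forall M, gen A B M ->
      ((forall i j, `|M i j - (1 : 'M[C]_2) i j| < eps) \/
       (forall i j, `|M i j + (1 : 'M[C]_2) i j| < eps)) ->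
      psl_trivial M.
End Defs.

(* Main.v *)
Require Import Defs.
From HB Require Import structures.
From mathcomp Require Import all_boot all_order all_algebra.
From mathcomp Require Import reals.
From mathcomp Require Import complex ring.
From Stdlib Require Import Classical.
Import Order.TTheory GRing.Theory Num.Theory.
Local Open Scope ring_scope.

Section S.
Variable R : realType.
Local Notation C := (R[i]).
Implicit Types M N X Y : 'M[C]_2.
Lemma mx2P M N : M 0 0 = N 0 0 -> M 0 1 = N 0 1 -> M 1 0 = N 1 0 -> M 1 1 = N 1 1 -> M = N.
Proof.
move=> h1 h2 h3 h4; apply/matrixP=> i j.
have [->|->] : i = 0 \/ i = 1 by case: i => [[|[|//]] Hi]; [left|right]; apply/val_inj.
all: have [->|->] : j = 0 \/ j = 1 by case: j => [[|[|//]] Hj]; [left|right]; apply/val_inj.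
all: by [].
Qed.
Lemma det2 M : \det M = M 0 0 * M 1 1 - M 0 1 * M 1 0.
Proof.
rewrite (expand_det_row _ 0) !big_ord_recl big_ord0 /cofactor !det_mx11 !mxE /=.
have L1 : (lift 0 (0:'I_1) : 'I_2) = 1 by apply/val_inj.
have L2 : (lift (1:'I_2) (0:'I_1) : 'I_2) = 0 by apply/val_inj.
have L3 : (lift ord0 (ord0 : 'I_1) : 'I_2) = 1 by apply/val_inj.
rewrite ?L1 ?L3 ?L2 /=. rewrite (_ : (ord0 : 'I_2) = 0) // expr0 expr1 addr0 mul1r mulN1r mulrN. done.
Qed.
Lemma o0 : (ord0 : 'I_2) = 0. Proof. exact/val_inj. Qed.
Lemma o1 : (lift ord0 (ord0 : 'I_1) : 'I_2) = 1. Proof. exact/val_inj. Qed.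
Lemma tr2 M : \tr M = M 0 0 + M 1 1.
Proof. rewrite /mxtrace !big_ord_recl big_ord0 addr0 /= o0 o1 //. Qed.

Lemma mul2E M N i j : (M * N) i j = M i 0 * N 0 j + M i 1 * N 1 j.
Proof. rewrite !mxE !big_ord_recl big_ord0 addr0 /= o0 o1 //. Qed.

Lemma CH2 M : M * M = \tr M *: M - (\det M)%:M.
Proof.
apply: mx2P; rewrite !mul2E det2 tr2 !mxE /=. 
rewrite ?mulr1n ?mulr0n.
all: ring.
Qed.
Lemma mulMs M a : M * a%:M = a *: M. Proof. exact: mul_mx_scalar. Qed.
Lemma mulsM a M : a%:M * M = a *: M. Proof. exact: mul_scalar_mx. Qed.
Lemma unit2 M : \det M = 1 -> M \is a GRing.unit.
Proof. by move=> h; rewrite unitmxE h unitr1. Qed.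

Lemma inv2 M : \det M = 1 -> M^-1 = (\tr M)%:M - M.
Proof.
move=> h.
have e : M * ((\tr M)%:M - M) = 1.
  rewrite mulrDr mulrN CH2 h mulMs opprB addrC subrK. done.
by rewrite -[RHS](mulKr (unit2 _ h)) e mulr1.
Qed.

Lemma posC (x : C) : 0 < x -> x = ((complex.Re x)%:C)%C /\ 0 < complex.Re x.
Proof. case: x => a b; rewrite ltcE /= => /andP[/eqP -> h]; by split. Qed.

Lemma NXN N X : \tr N = 0 -> \det N = 0 -> N * X * N = \tr (N * X) *: N.
Proof.
rewrite tr2 det2 => h1 h2.
have e4 : N 1 1 = - N 0 0 by apply/eqP; rewrite -addr_eq0 addrC h1.
apply: mx2P; rewrite !mul2E !mxE tr2 !mul2E e4; rewrite e4 in h2.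
all: apply/eqP; rewrite -subr_eq0; apply/eqP.
- transitivity (- X 1 1 * (N 0 0 * - N 0 0 - N 0 1 * N 1 0)); [ring | by rewrite h2 mulr0].
- transitivity (X 0 1 * (N 0 0 * - N 0 0 - N 0 1 * N 1 0)); [ring | by rewrite h2 mulr0].
- transitivity (X 1 0 * (N 0 0 * - N 0 0 - N 0 1 * N 1 0)); [ring | by rewrite h2 mulr0].
- transitivity (- X 0 0 * (N 0 0 * - N 0 0 - N 0 1 * N 1 0)); [ring | by rewrite h2 mulr0].
Qed.

Lemma add2E X Y i j : (X + Y) i j = X i j + Y i j. Proof. by rewrite mxE. Qed.
Lemma opp2E X i j : (- X) i j = - X i j. Proof. by rewrite mxE. Qed.
Lemma scl2E a X i j : (a *: X) i j = a * X i j. Proof. by rewrite mxE. Qed.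

Lemma polCH X Y : X*Y + Y*X = \tr X *: Y + \tr Y *: X + (\tr (X*Y) - \tr X * \tr Y)%:M.
Proof. apply: mx2P; rewrite !add2E !mul2E !scl2E !tr2 !mul2E !mxE /= ?mulr1n ?mulr0n; ring. Qed.

Section Grp.
Variables A B : 'M[C]_2.
Hypotheses (uA : A \is a GRing.unit) (uB : B \is a GRing.unit).

Lemma gen_unit M : gen A B M -> M \is a GRing.unit.
Proof. by elim=> [|M0 _ IH|M0 _ IH|M0 _ IH|M0 _ IH]; rewrite ?unitr1 // unitrMl // ?unitrV. Qed.

Lemma gen_mul M N : gen A B M -> gen A B N -> gen A B (M * N).
Proof.
move=> hM hN; elim: hM => [|M' _ IH|M' _ IH|M' _ IH|M' _ IH]; rewrite ?mul1r // -mulrA.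
- exact: genA. - exact: genAV. - exact: genB. - exact: genBV.
Qed.

Lemma gA : gen A B A. Proof. have h : gen A B (A * 1) by apply: genA; apply: gen1. by rewrite mulr1 in h. Qed.
Lemma gAV : gen A B A^-1. Proof. have h : gen A B (A^-1 * 1) by apply: genAV; apply: gen1. by rewrite mulr1 in h. Qed.
Lemma gB : gen A B B. Proof. have h : gen A B (B * 1) by apply: genB; apply: gen1. by rewrite mulr1 in h. Qed.
Lemma gBV : gen A B B^-1. Proof. have h : gen A B (B^-1 * 1) by apply: genBV; apply: gen1. by rewrite mulr1 in h. Qed.

Lemma gen_inv M : gen A B M -> gen A B M^-1.
Proof.
have uA' : A^-1 \is a GRing.unit by rewrite unitrV.
have uB' : B^-1 \is a GRing.unit by rewrite unitrV.
move=> hM; elim: hM => [|M' hM' IH|M' hM' IH|M' hM' IH|M' hM' IH]; first by rewrite invr1; exact: gen1.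
- rewrite (invrM uA (gen_unit _ hM')); apply: gen_mul IH _; exact: gAV.
- rewrite (invrM (uA' ) (gen_unit _ hM')) invrK; apply: gen_mul IH _; exact: gA.
- rewrite (invrM uB (gen_unit _ hM')); apply: gen_mul IH _; exact: gBV.
- rewrite (invrM (uB') (gen_unit _ hM')) invrK; apply: gen_mul IH _; exact: gB.
Qed.
End Grp.

Definition nearS (M : 'M[C]_2) (sg e : C) := forall i j, `|M i j - (sg%:M) i j| < e.
Definition nearD M e := nearS M 1 e \/ nearS M (-1) e.

Lemma scalN (a : C) : (- a)%:M = - (a%:M) :> 'M[C]_2.
Proof. by rewrite raddfN. Qed.

Lemma nearS_opp M sg e : nearS (-M) sg e -> nearS M (-sg) e.
Proof.
move=> h i j; rewrite scalN opp2E opprK; have := h i j.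
by rewrite -normrN opp2E opprD !opprK.
Qed.

Lemma nearD_opp M e : nearD (-M) e -> nearD M e.
Proof.
case=> h; [right | left]; move/nearS_opp: h => //; by rewrite opprK.
Qed.

Lemma nearS_le M sg e e' : e <= e' -> nearS M sg e -> nearS M sg e'.
Proof. by move=> le h i j; apply: lt_le_trans (h i j) le. Qed.

Lemma nearD_le M e e' : e <= e' -> nearD M e -> nearD M e'.
Proof. by move=> le [h|h]; [left|right]; apply: nearS_le h. Qed.

Lemma near_mul X Y (s t d : C) : `|s| = 1 -> `|t| = 1 -> 0 <= d -> d <= 1 ->
  nearS X s d -> nearS Y t d -> nearS (X * Y) (s * t) (d + d + (d + d)).
Proof.
move=> hs ht d0 d1 hX hY i j.
pose E := X - s%:M; pose F := Y - t%:M.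
have hE k l : `|E k l| < d by rewrite /E add2E opp2E; exact: hX.
have hF k l : `|F k l| < d by rewrite /F add2E opp2E; exact: hY.
have eq : X * Y - (s * t)%:M = s *: F + t *: E + E * F.
  apply: mx2P; rewrite /E /F !add2E !opp2E !scl2E !mul2E !add2E !opp2E !mxE /= ?mulr1n ?mulr0n; ring.
have -> : (X * Y) i j - (s * t)%:M i j = (X * Y - (s * t)%:M) i j by rewrite add2E opp2E.
rewrite eq !add2E !scl2E mul2E.
have h1 : `|s * F i j| < d by rewrite normrM hs mul1r.
have h2 : `|t * E i j| < d by rewrite normrM ht mul1r.
have hp k l k' l' : `|E k l * F k' l'| <= d.
  rewrite normrM; apply: le_trans (_ : d * d <= d).
    by apply: ler_pM => //; apply: ltW.
  by rewrite -[leRHS]mulr1; apply: ler_wpM2l.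
apply: le_lt_trans (ler_normD _ _) _.
apply: ltr_leD.
  by apply: le_lt_trans (ler_normD _ _) _; apply: ltrD.
by apply: le_trans (ler_normD _ _) _; apply: lerD.
Qed.

Lemma nearD_mul X Y d : 0 <= d -> d <= 1 -> nearD X d -> nearD Y d -> nearD (X * Y) (d + d + (d + d)).
Proof.
move=> d0 d1 [hX|hX] [hY|hY].
- by left; rewrite -[1]mulr1; apply: near_mul; rewrite ?normr1.
- by right; rewrite -[-1]mul1r; apply: near_mul; rewrite ?normr1 ?normrN1.
- by right; rewrite -[-1]mulr1; apply: near_mul; rewrite ?normr1 ?normrN1.
- left; have e1 : (1:C) = -1 * -1 by rewrite mulrNN mulr1.
  by rewrite [X in nearS _ X]e1; apply: near_mul; rewrite ?normrN1.
Qed.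

Lemma ptriv_opp M : psl_trivial (-M) -> psl_trivial M.
Proof. by case=> h; [right|left]; rewrite -[M]opprK h ?opprK. Qed.

Lemma nearD_stmt M e : nearD M e ->
  ((forall i j, `|M i j - (1 : 'M[C]_2) i j| < e) \/ (forall i j, `|M i j + (1 : 'M[C]_2) i j| < e)).
Proof.
case=> h; [left|right] => i j; have := h i j => //.
by rewrite scalN opp2E opprK.
Qed.

Lemma stmt_nearD M e :
  ((forall i j, `|M i j - (1 : 'M[C]_2) i j| < e) \/ (forall i j, `|M i j + (1 : 'M[C]_2) i j| < e)) -> nearD M e.
Proof.
case=> h; [left|right] => i j; have := h i j => //.
by rewrite scalN opp2E opprK.
Qed.

Lemma pos_min (x y : C) : 0 < x -> 0 < y -> exists z, [/\ 0 < z, z <= x & z <= y].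
Proof.
move=> /posC[-> x0] /posC[-> y0].
exists ((Num.min (complex.Re x) (complex.Re y))%:C)%C.
by rewrite !lecR ltcR lt_min x0 y0 !ge_min !lexx orbT.
Qed.

Section Disc.
Variables A B phi H : 'M[C]_2.
Hypotheses (uA : A \is a GRing.unit) (uB : B \is a GRing.unit).
Hypotheses (hphi : phi * phi = -1) (hc : phi * A = H * phi) (hH : gen A B H).

Lemma uphi : phi \is a GRing.unit.
Proof. apply/unitrP; exists (- phi); by rewrite mulrN mulNr hphi opprK. Qed.

Lemma invphi : phi^-1 = - phi.
Proof.
have e : phi * (- phi) = 1 by rewrite mulrN hphi opprK.
by rewrite -[RHS](mulKr uphi) e mulr1.
Qed.

Lemma uH : H \is a GRing.unit.
Proof. exact: (gen_unit _ _ uA uB _ hH). Qed.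

Lemma phiH : phi * H = A * phi.
Proof.
have e : phi * H * phi = - A by rewrite -mulrA -hc mulrA hphi mulN1r.
by rewrite -[LHS](mulrK uphi) e invphi mulrNN.
Qed.

Lemma conj_inv X Y : X \is a GRing.unit -> Y \is a GRing.unit ->
  phi * X = Y * phi -> phi * X^-1 = Y^-1 * phi.
Proof.
move=> uX uY e.
by rewrite -[RHS](mulrK uX) -(mulrA _ phi) e (mulKr uY).
Qed.

Lemma conj_gen W : gen A H W -> exists2 W', gen A H W' & phi * W = W' * phi.
Proof.
elim=> [|M _ [W' g e]|M _ [W' g e]|M _ [W' g e]|M _ [W' g e]].
- by exists 1; [exact: gen1 | rewrite mulr1 mul1r].
- by exists (H * W'); [exact: genB | rewrite mulrA hc -mulrA e mulrA].
- exists (H^-1 * W'); first exact: genBV.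
  by rewrite mulrA (conj_inv _ _ uA uH hc) -mulrA e mulrA.
- by exists (A * W'); [exact: genA | rewrite mulrA phiH -mulrA e mulrA].
- exists (A^-1 * W'); first exact: genAV.
  by rewrite mulrA (conj_inv _ _ uH uA phiH) -mulrA e mulrA.
Qed.

Definition Pf M := exists2 W, gen A H W & (M = W \/ M = - W \/ M = W * phi \/ M = - (W * phi)).

Lemma Pf_opp M : Pf M -> Pf (- M).
Proof. case=> W g [->|[->|[->|->]]]; exists W; rewrite ?opprK; tauto. Qed.

Lemma Pf_A M : Pf M -> Pf (A * M).
Proof.
case=> W g h; exists (A * W); first exact: genA.
by case: h => [->|[->|[->|->]]]; rewrite ?mulrN ?mulrA; tauto.
Qed.

Lemma Pf_AV M : Pf M -> Pf (A^-1 * M).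
Proof.
case=> W g h; exists (A^-1 * W); first exact: genAV.
by case: h => [->|[->|[->|->]]]; rewrite ?mulrN ?mulrA; tauto.
Qed.

Lemma Pf_phi M : Pf M -> Pf (phi * M).
Proof.
case=> W g h; have [W' g' e] := conj_gen _ g; exists W' => //.
case: h => [->|[->|[->|->]]]; rewrite ?mulrN ?mulrA e; try tauto.
- by rewrite -mulrA hphi mulrN1; tauto.
- by rewrite -mulrA hphi mulrN1 opprK; tauto.
Qed.

Lemma coset M : gen A phi M -> Pf M.
Proof.
elim=> [|M' _ IH|M' _ IH|M' _ IH|M' _ IH].
- by exists 1; [exact: gen1 | left].
- exact: Pf_A.
- exact: Pf_AV.
- exact: Pf_phi.
- by rewrite invphi mulNr; apply/Pf_opp/Pf_phi.
Qed.

Lemma subgen W : gen A H W -> gen A B W.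
Proof.
elim=> [|M _ IH|M _ IH|M _ IH|M _ IH].
- exact: gen1.
- exact: genA.
- exact: genAV.
- exact: (gen_mul _ _ _ _ hH IH).
- exact: (gen_mul _ _ _ _ (gen_inv _ _ uA uB _ hH) IH).
Qed.

Lemma QQ W1 W2 : gen A H W1 -> gen A H W2 ->
  exists2 W, gen A H W & W1 * phi * (W2 * phi) = - W.
Proof.
move=> g1 g2; have [W' g' e] := conj_gen _ g2.
exists (W1 * W'); first exact: (gen_mul _ _ _ _ g1 g').
by rewrite -mulrA (mulrA phi) e -!mulrA hphi mulrN1 mulrN.
Qed.

Lemma Pf_triv eps W M : gen A H W -> (M = W \/ M = - W) ->
  (forall M, gen A B M -> nearD M eps -> psl_trivial M) -> nearD M eps -> psl_trivial M.
Proof.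
move=> g [->|->] hd n; first exact: hd _ (subgen _ g) n.
apply: ptriv_opp; rewrite opprK; apply: hd _ (subgen _ g) _; exact: nearD_opp.
Qed.

Lemma disc_ext : psl_discrete A B -> psl_discrete A phi.
Proof.
case=> eps [eps0 hd0].
have hd : forall M, gen A B M -> nearD M eps -> psl_trivial M.
  by move=> M g n; apply: hd0 _ g (nearD_stmt _ _ n).
have eps4 : 0 < eps / 4 by rewrite divr_gt0 // ltr0n.
have [d [d0 d1 d4]] := pos_min _ _ ltr01 eps4.
have dsum : d + d + (d + d) <= eps.
  have -> : eps = eps / 4 + eps / 4 + (eps / 4 + eps / 4) by field.
  by apply: lerD; apply: lerD.
have deps : d <= eps.
  apply: le_trans dsum; rewrite -addrA lerDl; apply: addr_ge0; [exact: ltW|].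
  by apply: addr_ge0; exact: ltW.
have dge0 : 0 <= d := ltW d0.
case: (classic (exists M0, [/\ gen A phi M0,
   (exists2 W, gen A H W & (M0 = W * phi \/ M0 = - (W * phi))), nearD M0 d & ~ psl_trivial M0])).
- case=> M0 [gM0 [W0 gW0 hW0] nM0 ntM0].
  have [i [j hij]] : exists i j, M0 i j != (1%:M : 'M[C]_2) i j.
    apply: NNPP => hn; apply: ntM0; left; apply/matrixP => i j.
    case: (eqVneq (M0 i j) ((1%:M : 'M[C]_2) i j)) => // hne.
    by exfalso; apply: hn; exists i, j.
  have [k [l hkl]] : exists i j, M0 i j != ((-1)%:M : 'M[C]_2) i j.
    apply: NNPP => hn; apply: ntM0; right; rewrite -scalN; apply/matrixP => i' j'.
    case: (eqVneq (M0 i' j') (((-1)%:M : 'M[C]_2) i' j')) => // hne.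
    by exfalso; apply: hn; exists i', j'.
  have d1p : 0 < `|M0 i j - (1%:M : 'M[C]_2) i j| by rewrite normr_gt0 subr_eq0.
  have d2p : 0 < `|M0 k l - ((-1)%:M : 'M[C]_2) k l| by rewrite normr_gt0 subr_eq0.
  have [z1 [z10 z1a z1b]] := pos_min _ _ d1p d2p.
  have [e' [e'0 e'd e'z]] := pos_min _ _ d0 z10.
  have nn : forall sg, (sg = 1 \/ sg = -1) -> ~ nearS M0 sg e'.
    move=> sg [->|->] h.
    + by have := lt_le_trans (h i j) (le_trans e'z z1a); rewrite ltxx.
    + by have := lt_le_trans (h k l) (le_trans e'z z1b); rewrite ltxx.
  have nnD : forall M, (M = M0 \/ M = - M0) -> ~ nearD M e'.
    move=> M [->|->] [h|h].
    + exact: (nn 1 (or_introl erefl) h).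
    + exact: (nn (-1) (or_intror erefl) h).
    + exact: (nn (-1) (or_intror erefl) (nearS_opp _ _ _ h)).
    + by apply: (nn 1 (or_introl erefl)); move: (nearS_opp _ _ _ h); rewrite opprK.
  exists e'; split => // M gM nM0'; have nM := stmt_nearD _ _ nM0'.
  have [W gW hM] := coset _ gM.
  case: hM => [hM|[hM|hM]].
  + by apply: (Pf_triv _ _ _ gW _ hd); [left; exact: hM|]; apply: (nearD_le _ _ _ (le_trans e'd deps) nM).
  + by apply: (Pf_triv _ _ _ gW _ hd); [right; exact: hM|]; apply: (nearD_le _ _ _ (le_trans e'd deps) nM).
  exfalso.
  have nMd : nearD M d by apply: (nearD_le _ _ _ e'd nM).
  have tMM0 : psl_trivial (M * M0).
    have [W1 g1 e1] := QQ _ _ gW gW0.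
    have hn := nearD_le _ _ _ dsum (nearD_mul _ _ _ dge0 d1 nMd nM0).
    apply: (Pf_triv _ _ _ g1 _ hd hn).
    by case: hM => ->; case: hW0 => ->; rewrite ?mulrN ?mulNr ?opprK e1 ?opprK; first [by left | by right].
  have tM0M0 : psl_trivial (M0 * M0).
    have [W1 g1 e1] := QQ _ _ gW0 gW0.
    have hn := nearD_le _ _ _ dsum (nearD_mul _ _ _ dge0 d1 nM0 nM0).
    apply: (Pf_triv _ _ _ g1 _ hd hn).
    by case: hW0 => ->; rewrite ?mulrN ?mulNr ?opprK e1 ?opprK; first [by left | by right].
  have key : M * (M0 * M0) = M * M0 * M0 by rewrite mulrA.
  apply: (nnD M) nM.
  case: tM0M0 => e2; rewrite e2 in key; case: tMM0 => e3; rewrite e3 in key.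
  + by left; rewrite -[M]mulr1 key mul1r.
  + by right; rewrite -[M]mulr1 key mulN1r.
  + by right; apply: oppr_inj; rewrite -mulrN1 key mul1r opprK.
  + by left; apply: oppr_inj; rewrite -mulrN1 key mulN1r.
- move=> hn; exists d; split => // M gM nM0'; have nM := stmt_nearD _ _ nM0'.
  have [W gW hM] := coset _ gM.
  case: hM => [hM|[hM|hM]].
  + by apply: (Pf_triv _ _ _ gW _ hd); [left; exact: hM|]; apply: (nearD_le _ _ _ deps nM).
  + by apply: (Pf_triv _ _ _ gW _ hd); [right; exact: hM|]; apply: (nearD_le _ _ _ deps nM).
  apply: NNPP => nt; apply: hn; exists M; split => //; by exists W.
Qed.

End Disc.

Lemma conj_inv' (phi X Y : 'M[C]_2) : X \is a GRing.unit -> Y \is a GRing.unit ->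
  phi * X = Y * phi -> phi * X^-1 = Y^-1 * phi.
Proof.
move=> uX uY e.
by rewrite -[RHS](mulrK uX) -(mulrA _ phi) e (mulKr uY).
Qed.

Lemma detC N X : \tr N = 0 -> \det N = 0 -> \det (N * X - X * N) = - (\tr (N * X)) ^+ 2.
Proof.
rewrite tr2 det2 => h1 h2.
have e4 : N 1 1 = - N 0 0 by apply/eqP; rewrite -addr_eq0 addrC h1.
rewrite det2 tr2 !add2E !opp2E !mul2E e4; rewrite e4 in h2.
transitivity (- ((N 0 0 * X 0 0 + N 0 1 * X 1 0) + (N 1 0 * X 0 1 + - N 0 0 * X 1 1)) ^+ 2
  - (4 * X 0 1 * X 1 0 + (X 0 0 - X 1 1) ^+ 2) * (N 0 0 * - N 0 0 - N 0 1 * N 1 0)).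
  ring.
by rewrite h2 mulr0 subr0.
Qed.

Lemma ord2 (i : 'I_2) : i = 0 \/ i = 1.
Proof. by case: i => [[|[|//]] Hi]; [left|right]; apply/val_inj. Qed.

Lemma exX N : N != 0 -> exists X, \tr (N * X) != 0.
Proof.
move=> nN.
have [i [j hij]] : exists i j, N i j != 0.
  apply: NNPP => hn; move/eqP: nN; apply; apply/matrixP => i j.
  case: (eqVneq (N i j) 0) => [->|hne]; first by rewrite mxE.
  by exfalso; apply: hn; exists i, j.
exists (delta_mx j i).
case: (ord2 i) hij => ->; case: (ord2 j) => -> hij;
 rewrite tr2 !mul2E !mxE /= ?mulr1n ?mulr0n ?mulr0 ?mulr1 ?addr0 ?add0r //.
Qed.

Lemma fin_props (phi : 'M[C]_2) : \det phi = 1 -> \tr phi = 0 ->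
  [/\ SL2 phi, elliptic phi, order_two phi & phi * phi = -1].
Proof.
move=> hd ht.
have pp : phi * phi = -1 by rewrite CH2 hd ht scale0r sub0r.
have nt : ~ psl_trivial phi.
  move=> h; have : (1 : 'M[C]_2) = -1 by case: h => e; rewrite -pp e ?mulrNN mulr1.
  move/matrixP/(_ 0 0); rewrite !mxE /= mulr1n => /eqP.
  by rewrite -addr_eq0 -mulr2n pnatr_eq0.
split => //.
- by rewrite /elliptic ht real0 normr0 ltr0n.
- by split => //; right; rewrite expr2.
Qed.

Lemma para_dec A : parabolic A -> exists s : C, s * s = 1 /\ \tr A = s + s.
Proof.
case=> [[h|h] _]; [exists 1 | exists (-1)]; rewrite h; split; ring.
Qed.

Lemma trC (X Y : 'M[C]_2) : \tr (X * Y) = \tr (Y * X).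
Proof. exact: mxtrace_mulC. Qed.

Lemma trD2 (X Y : 'M[C]_2) : \tr (X + Y) = \tr X + \tr Y.
Proof. by rewrite !tr2 !add2E addrACA. Qed.
Lemma trN2 (X : 'M[C]_2) : \tr (- X) = - \tr X.
Proof. by rewrite !tr2 !opp2E opprD. Qed.
Lemma trZ2 a (X : 'M[C]_2) : \tr (a *: X) = a * \tr X.
Proof. by rewrite !tr2 !scl2E mulrDr. Qed.

Lemma tr1 : \tr (1 : 'M[C]_2) = 2.
Proof. by rewrite tr2 !mxE. Qed.

Lemma main (A B : 'M[C]_2) : SL2 A -> SL2 B -> parabolic A ->
  exists B' : 'M[C]_2,
    [/\ SL2 B', elliptic B', order_two B',
        \tr (comm A B) - 2 = \tr (comm A B') - 2
      & psl_discrete A B -> psl_discrete A B'].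
Proof.
move=> hA hB hP.
have [s [hs htr]] := para_dec _ hP.
have uA := unit2 _ hA; have uB := unit2 _ hB.
have uAV : A^-1 \is a GRing.unit by rewrite unitrV.
have uBV : B^-1 \is a GRing.unit by rewrite unitrV.
pose N := A - s%:M.
have AN : A = s%:M + N by rewrite /N addrC subrK.
have CHA : A * A = (s + s) *: A - (s * s)%:M by rewrite CH2 hA htr hs.
have hNN : N * N = 0.
  rewrite /N mulrBl !mulrBr CHA mulMs !mulsM.
  apply: mx2P; rewrite !add2E !opp2E !scl2E !mxE /= ?mulr1n ?mulr0n; ring.
have trN : \tr N = 0.
  rewrite /N tr2 !add2E !opp2E !mxE /= !mulr1n; rewrite tr2 in htr.
  by rewrite addrACA -opprD htr subrr.
have detN : \det N = 0.
  have := CH2 N; rewrite hNN trN scale0r sub0r => /matrixP /(_ 0 0).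
  rewrite !mxE /= mulr1n => /eqP; rewrite eq_sym oppr_eq0 => /eqP //.
have hs1 : s = 1 \/ s = -1.
  have : (s - 1) * (s + 1) = 0.
    by transitivity (s * s - 1); [ring | rewrite hs subrr].
  move/eqP; rewrite mulf_eq0 subr_eq0 addr_eq0 => /orP[/eqP|/eqP]; tauto.
have Nn0 : N != 0.
  apply/eqP => N0; case: hP => _; apply; rewrite AN N0 addr0.
  by case: hs1 => ->; [left | right; exact: scalN].
have Ainv : A^-1 = s%:M - N.
  by rewrite inv2 // htr raddfD /= AN opprD addrA addrK.
clearbody N.
pose t := \tr (B * N).
case: (eqVneq t 0) => ht.
- have [X hX] := exX _ Nn0.
  pose t0 := \tr (N * X). pose C0 := N * X - X * N.
  pose phi := ('i%C / t0) *: C0.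
  have trC0 : \tr C0 = 0 by rewrite /C0 raddfB /= trC subrr.
  have detphi : \det phi = 1.
    rewrite /phi detZ detC // -/t0 expr_div_n sqr_i; field; exact: hX.
  have trphi : \tr phi = 0 by rewrite /phi mxtraceZ trC0 mulr0.
  have [hSL hEl hO2 pp] := fin_props _ detphi trphi.
  have NC : N * C0 = - (C0 * N).
    by rewrite /C0 mulrBr mulrBl !mulrA hNN mul0r -(mulrA X N N) hNN mulr0 sub0r subr0.
  have phiN : phi * N = - (N * phi).
    by rewrite /phi -scalerAl -scalerAr NC scalerN opprK.
  have hcA : phi * A = A^-1 * phi.
    by rewrite Ainv {1}AN mulrDr mulrBl mulMs mulsM phiN.
  have uphi := unit2 _ detphi.
  have commphi : comm A phi = A * A.
    have e := conj_inv' _ _ _ uA uAV hcA.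
    by rewrite invrK in e; rewrite /comm -(mulrA A phi) e mulrA (mulrK uphi).
  have trAA : \tr (A * A) = 2.
    rewrite CHA tr2 !add2E !opp2E !scl2E !mxE /= !mulr1n; rewrite tr2 in htr.
    transitivity ((s + s) * (A 0 0 + A 1 1) - 2 * (s * s)); first ring.
    rewrite htr; transitivity (2 * (s * s)); first ring.
    by rewrite hs mulr1.
  have trAB : \tr (comm A B) = 2.
    have NBN : N * B * N = 0 by rewrite NXN // trC -/t ht scale0r.
    have e1 : (s%:M + N) * B * (s%:M - N) = (s * s) *: B - s *: (B * N) + s *: (N * B) - N * B * N.
      apply: mx2P; rewrite !add2E !opp2E !scl2E !mul2E !add2E !opp2E !mxE /= ?mulr1n ?mulr0n; ring.
    rewrite /comm Ainv {1}AN e1 NBN subr0 mulrDl mulrBl -!scalerAl (mulrV uB) (mulrK uB).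
    rewrite !trD2 !trN2 !trZ2 trN tr1 trC (mulKr uB) trN.
    by transitivity (2 * (s * s)); [ring | rewrite hs mulr1].
  exists phi; split => //.
  + by rewrite trAB commphi trAA.
  + by move=> hd; apply: (disc_ext _ _ _ _ uA uB pp hcA _ hd); exact: gAV.
- pose beta := - \tr B / t. pose psi := 1 + beta *: N. pose phi := B * psi.
  have detpsi : \det psi = 1.
    rewrite /psi det2 !add2E !scl2E !mxE /= ?mulr1n ?mulr0n; move: trN detN; rewrite tr2 det2 => h1 h2.
    transitivity (1 + beta * (N 0 0 + N 1 1) + beta ^+ 2 * (N 0 0 * N 1 1 - N 0 1 * N 1 0)); first ring.
    by rewrite h1 h2 !mulr0 !addr0.
  have detphi : \det phi = 1 by rewrite /phi detM hB detpsi mulr1.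
  have trphi : \tr phi = 0.
    by rewrite /phi /psi mulrDr mulr1 -scalerAr raddfD /= mxtraceZ -/t /beta divfK // addrN.
  have [hSL hEl hO2 pp] := fin_props _ detphi trphi.
  pose H := B * A * B^-1.
  have psiN : psi * N = N * psi.
    apply: mx2P; rewrite /psi !mul2E !add2E !scl2E !mxE /= ?mulr1n ?mulr0n; ring.
  have psiA : psi * A = A * psi.
    clearbody psi; by rewrite AN mulrDr mulrDl mulsM mulMs psiN.
  have hc : phi * A = H * phi by rewrite /phi /H -mulrA psiA !mulrA (mulrVK uB).
  have uBA : B * A \is a GRing.unit by rewrite unitrMl.
  have uH : H \is a GRing.unit by rewrite /H unitrMl ?unitrV.
  have uphi := unit2 _ detphi.
  have Hinv : H^-1 = B * A^-1 * B^-1.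
    by rewrite /H (invrM uBA uBV) invrK (invrM uB uA) mulrA.
  have commphi : comm A phi = comm A B.
    have e := conj_inv' _ _ _ uA uH hc.
    by rewrite /comm -(mulrA A phi) e mulrA (mulrK uphi) Hinv !mulrA.
  exists phi; split => //.
  + by rewrite commphi.
  + move=> hd; apply: (disc_ext _ _ _ _ uA uB pp hc _ hd).
    by apply: gen_mul; [apply: gen_mul; [exact: gB | exact: gA] | exact: gBV].
Qed.
End S.

Theorem theorem6 (R : realType) (A B : 'M[R[i]]_2) :
  SL2 A -> SL2 B -> parabolic A ->
  exists B' : 'M[R[i]]_2,
    [/\ SL2 B', elliptic B', order_two B',
        \tr (comm A B) - 2 = \tr (comm A B') - 2
      & psl_discrete A B -> psl_discrete A B'].
Proof. exact: main. Qed.
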